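(* Over the class of serial models (models in which every world has at least one $R$-successor): (1) the formula $[\ddagger^{\ast}(p\land q)](\lnot\Box p\land\lnot\Box q)$ is true at every world of every serial model; but (2) the formula $[\ddagger(p\land q)](\lnot\Box p\land\lnot\Box q)$ is not true at every world of every serial model. Here $p,q$ are distinct atoms.
   Context: Fix a countable non-empty set $\mathit{At}$ of atoms. Formulas are built from $\top$, atoms, $\lnot$, $\land$, $\Box$ and, for propositional $\pi$, operators $[\ddagger\pi]$ and $[\ddagger^{\ast}\pi]$. A model is $\mathcal{M}=\langle W,R,V\rangle$, $W\neq\varnothing$, $R\subseteq W\times W$, $V:\mathit{At}\to\mathcal{P}(W)$, standard Kripke semantics for $\Box$. A literal is an atom or its negation; a clause is a finite set $D$ of literals read as $\bigvee D$ ($\bigvee\varnothing:=\bot$), tautological if it contains $p$ and $\lnot p$ for some $p$. For propositional $\pi$, $\mathcal{C}(\pi)$ is the set of non-tautological clauses $D$ with $\models\pi\to\bigvee D$ and no $D'\subsetneq D$ with $\models\pi\to\bigvee D'$. For a model $\mathcal{M}$ and a finite family $(D_i)_{i\in I}$ of non-tautological clauses with $0\notin I$, $\mathcal{M}^{(D_i)_{i\in I}}_u=\langle W',R',V'\rangle$ has $W'=W\times(\{0\}\cup I)$, $(w,i)R'(v,j)$ iff $wRv$, $(w,0)\in V'(p)$ iff $w\in V(p)$, and for $i\in I$: $(w,i)\in V'(p)$ iff $\lnot p\in D_i$, or $\{p,\lnot p\}\cap D_i=\varnothing$ and $w\in V(p)$. Semantics: $\mathcal{M},w\models[\ddagger\pi]\varphi$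 iff for all $D_1\in\mathcal{C}(\pi)$, $D_2\in\mathcal{C}(\lnot\pi)$, $\mathcal{M}^{(D_1,D_2)}_u,(w,0)\models\varphi$ (indexed by $I=\{1,2\}$). Strong forgetting whether: $\mathcal{M},w\models[\ddagger^{\ast}\pi]\varphi$ iff $\mathcal{M}^{\mathcal{C}(\pi)\cup\mathcal{C}(\lnot\pi)}_u,(w,0)\models\varphi$, where the family is the set $\mathcal{C}(\pi)\cup\mathcal{C}(\lnot\pi)$ indexed by itself (one new copy of $W$ per clause). *)

(* Defs.v *)
From mathcomp Require Import all_boot finmap.
Set Implicit Arguments.
Unset Strict Implicit.
Unset Printing Implicit Defensive.
Local Open Scope fset_scope.

Section Logic.
Variable At : countType.

Inductive pform : Type :=
| PTop : pform
| PAtom : At -> pform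
| PNeg : pform -> pform
| PAnd : pform -> pform -> pform.

Inductive form : Type :=
| FTop : form
| FAtom : At -> form
| FNeg : form -> form
| FAnd : form -> form -> form
| FBox : form -> form
| FForget : pform -> form -> form
| FSForget : pform -> form -> form.

Fixpoint peval (v : At -> bool) (pi : pform) : Prop :=
  match pi with
  | PTop => True
  | PAtom a => v a = true
  | PNeg pi' => ~ peval v pi'
  | PAnd pi1 pi2 => peval v pi1 /\ peval v pi2
  end.

(* Literals: (a, true) is the atom a, (a, false) is its negation. *)
Definition literal := (At * bool)%type.
(* Clauses: finite sets of literals, read disjunctively. *)
Definition clause := {fset literal}.

Definition clause_sat (v : At -> bool) (D : clause) : Prop :=
  exists2 l, l \in D & v l.1 = l.2.

Definition tautological (D : clause) : Prop :=
  exists a, (a, true) \in D /\ (a, false) \in D.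

Definition entails_clause (pi : pform) (D : clause) : Prop :=
  forall v : At -> bool, peval v pi -> clause_sat v D.

Definition Cl (pi : pform) (D : clause) : Prop :=
  ~ tautological D /\ entails_clause pi D /\
  ~ (exists D' : clause, D' `<` D /\ entails_clause pi D').

Record model : Type := Model {
  W : Type;
  W_inhab : inhabited W;
  R : W -> W -> Prop;
  V : At -> W -> Prop
}.

Definition serial (M : model) : Prop := forall w : W M, exists v, R w v.

(* The update M^{(D_i)_{i in I}}_u, with the copy 0 encoded as None and
   copy i in I encoded as Some i. *)
Definition update (M : model) (I : Type) (D : I -> clause) : model :=
  {| W := (W M * option I)%type;
     W_inhab := match W_inhab M with inhabits w => inhabits (w, None) end;
     R := fun x y => R x.1 y.1;
     V := fun a x => match x.2 with
                     | None => V a x.1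
                     | Some i => (a, false) \in D i \/
                                 ((a, true) \notin D i /\ (a, false) \notin D i
                                  /\ V a x.1)
                     end |}.

Fixpoint sat (phi : form) (M : model) (w : W M) {struct phi} : Prop :=
  match phi with
  | FTop => True
  | FAtom a => V a w
  | FNeg phi' => ~ sat phi' w
  | FAnd phi1 phi2 => sat phi1 w /\ sat phi2 w
  | FBox phi' => forall u : W M, R w u -> sat phi' u
  | FForget pi phi' =>
      forall D1 D2 : clause, Cl pi D1 -> Cl (PNeg pi) D2 ->
        sat phi' (M := update M (fun b : bool => if b then D1 else D2)) (w, None)
  | FSForget pi phi' =>
      sat phi' (M := update M (fun D : {D : clause | Cl pi D \/ Cl (PNeg pi) D} => proj1_sig D))
          (w, None)
  end.

End Logic.

(* Main.v *)
Require Import Defs.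
From mathcomp Require Import all_boot finmap.
Local Open Scope fset_scope.

Lemma proper_witness {T : choiceType} {A B : {fset T}} :
  A `<` B -> {subset A <= B} /\ exists2 x, x \in B & x \notin A.
Proof.
rewrite fproperE => /andP[/fsubsetP H1 /fsubsetPn H2]; by split.
Qed.

Lemma Cl_p (At : countType) (p q : At) :
  Cl (PAnd (PAtom p) (PAtom q)) [fset (p, true)].
Proof.
split; [|split].
- move=> [a [H1 H2]]. move: H1 H2; rewrite !in_fset1 => /eqP[->] /eqP; done.
- move=> v [Hp Hq]; exists (p, true); [by rewrite in_fset1|done].
- move=> [D' [Hpr Hent]].
  have [Hsub [x Hx Hnx]] := proper_witness Hpr.
  have [l Hl _] := Hent (fun _ => true) (conj erefl erefl).
  have := Hsub _ Hl; rewrite in_fset1 => /eqP El.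
  move: Hx; rewrite in_fset1 => /eqP Ex. subst. by rewrite Hl in Hnx.
Qed.

Lemma Cl_q (At : countType) (p q : At) :
  Cl (PAnd (PAtom p) (PAtom q)) [fset (q, true)].
Proof.
split; [|split].
- move=> [a [H1 H2]]. move: H1 H2; rewrite !in_fset1 => /eqP[->] /eqP; done.
- move=> v [Hp Hq]; exists (q, true); [by rewrite in_fset1|done].
- move=> [D' [Hpr Hent]].
  have [Hsub [x Hx Hnx]] := proper_witness Hpr.
  have [l Hl _] := Hent (fun _ => true) (conj erefl erefl).
  have := Hsub _ Hl; rewrite in_fset1 => /eqP El.
  move: Hx; rewrite in_fset1 => /eqP Ex. subst. by rewrite Hl in Hnx.
Qed.

Lemma Cl_n (At : countType) (p q : At) (hpq : p <> q) :
  Cl (PNeg (PAnd (PAtom p) (PAtom q))) [fset (p, false); (q, false)].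
Proof.
split; [|split].
- move=> [a [H1 H2]]. move: H1; rewrite in_fset2 => /orP[] /eqP; done.
- move=> v /= Hn. case Ep: (v p).
  + case Eq: (v q); first by exfalso; apply: Hn.
    exists (q, false); [by rewrite in_fset2 eqxx orbT|done].
  + exists (p, false); [by rewrite in_fset2 eqxx|done].
- move=> [D' [Hpr Hent]].
  have [Hsub [x Hx Hnx]] := proper_witness Hpr.
  have Hpe : peval (fun a => a != x.1) (PNeg (PAnd (PAtom p) (PAtom q))).
  { move: Hx => /=; rewrite in_fset2 => /orP[] /eqP -> /= [].
    + by rewrite eqxx.
    + by rewrite eqxx. }
  have [l Hl Hv] := Hent _ Hpe.
  have := Hsub _ Hl. rewrite in_fset2 => /orP[] /eqP El;
    move: Hx Hv Hnx; rewrite in_fset2 => /orP[] /eqP Ex; subst x l => /= Hv Hnx.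
  - by rewrite Hl in Hnx.
  - move: Hv => /negbFE /eqP E; by apply: hpq.
  - move: Hv => /negbFE /eqP E; by apply: hpq.
  - by rewrite Hl in Hnx.
Qed.

Theorem proposition8 (At : countType) (p q : At) (hpq : p <> q) :
  (forall (M : model At), serial M -> forall w : W M,
     sat (FSForget (PAnd (PAtom p) (PAtom q))
                   (FAnd (FNeg (FBox (FAtom p))) (FNeg (FBox (FAtom q))))) w)
  /\
  ~ (forall (M : model At), serial M -> forall w : W M,
     sat (FForget (PAnd (PAtom p) (PAtom q))
                  (FAnd (FNeg (FBox (FAtom p))) (FNeg (FBox (FAtom q))))) w).
Proof.
split.
- move=> M Hser w /=. have [v Hv] := Hser w. split.
  + move=> H. have := H (v, Some (exist _ [fset (p, true)] (or_introl (@Cl_p _ p q)))) Hv.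
    move=> /= [|[H1 _]]; first by rewrite in_fset1 => /eqP[].
    by rewrite in_fset1 eqxx in H1.
  + move=> H. have := H (v, Some (exist _ [fset (q, true)] (or_introl (@Cl_q _ p q)))) Hv.
    move=> /= [|[H1 _]]; first by rewrite in_fset1 => /eqP[].
    by rewrite in_fset1 eqxx in H1.
- move=> H.
  pose M := {| W := unit; W_inhab := inhabits tt; R := fun _ _ => True;
               V := fun (_ : At) (_ : unit) => True |}.
  have := H M (fun w => ex_intro _ tt I) tt _ _ (@Cl_p _ p q) (@Cl_n _ p q hpq).
  move=> /= [_]; apply; move=> [u [[]|]] _ //=.
  right; split; last split => //; rewrite in_fset1; apply/negP => /eqP; case=> E;
    try by [ | move: hpq; rewrite E ].
  by left; rewrite in_fset2 eqxx orbT.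
Qed.
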